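(* Let $\mathbb F_q$ be a finite field, and let $B_1 \subseteq \mathbb F_q^{m_1}$ and $B_2 \subseteq \mathbb F_q^{m_2}$. Suppose $B_1$ is $C_1$-weakly Sidorenko and $B_2$ is $C_2$-weakly Sidorenko. Then $B_1 \times B_2 := \{(x,y) \in \mathbb F_q^{m_1+m_2} : x \in B_1, y \in B_2\}$ is $C_1C_2$-weakly Sidorenko. In particular, if $B_1$ and $B_2$ are both Sidorenko, then so is $B_1 \times B_2$.
   Context: An affine relation on elements $x_1,\ldots,x_k$ of $\mathbb F_q^n$ is an equation $\sum_i \lambda_i x_i = 0$ with $\lambda_i \in \mathbb F_q$ and $\sum_i \lambda_i = 0$; it is nontrivial if some $\lambda_i \neq 0$. A set is affinely independent if it has no nontrivial affine relation; the affine rank $\mathrm{rank}_{\mathrm{aff}}(B)$ of $B \subseteq \mathbb F_q^m$ is the size of a maximal affinely independent subset of $B$. For $B \subseteq \mathbb F_q^m$ and $A \subseteq \mathbb F_q^n$, an affine homomorphism $B \to A$ is a map $\varphi: B \to A$ that extends to an affine map $\mathbb F_q^m \to \mathbb F_q^n$ (equivalently, preserves all affine relations); $\mathrm{hom}_{\mathrm{aff}}(B,A)$ denotes the number of affine homomorphisms $B \to A$. For a real $C$, $B \subseteq \mathbb F_q^m$ is called $C$-weakly Sidorenko if for every $n$ and every $A \subseteq \mathbb F_q^n$ with $|A| = \alpha N$, where $N = q^n$, we have $\mathrm{hom}_{\mathrm{aff}}(B,A) \geq \alpha^C N^{\mathrm{rank}_{\mathrm{aff}}(B)}$. $B$ is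 called Sidorenko if it is $|B|$-weakly Sidorenko. *)

(* Defs.v *)
From HB Require Import structures.
From mathcomp Require Import all_boot all_order all_algebra all_field.
From mathcomp Require Import reals exp Rstruct.
From Stdlib Require Import Rdefinitions.
Set Implicit Arguments. Unset Strict Implicit. Unset Printing Implicit Defensive.
Import Order.TTheory GRing.Theory Num.Theory.
Local Open Scope ring_scope.

Section Aff.
Variable F : finFieldType.

Definition aff_indep (m : nat) (S : {set 'rV[F]_m}) : bool :=
  [forall lam : {ffun 'rV[F]_m -> F},
    ((\sum_(x in S) lam x == 0) && (\sum_(x in S) lam x *: x == 0))
      ==> [forall x in S, lam x == 0]].

(* affine rank: size of a maximal (= maximum, by the matroid property)
   affinely independent subset of B *)
Definition rank_aff (m : nat) (B : {set 'rV[F]_m}) : nat :=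
  \max_(S : {set 'rV[F]_m} | (S \subset B) && aff_indep S) #|S|.

(* affine homomorphisms B -> A, i.e. maps phi : B -> A that extend to an
   affine map x |-> x *m M + c of F^m -> F^n.  A map on B is encoded as a
   finite function on F^m that vanishes outside B. *)
Definition hom_aff_set (m n : nat) (B : {set 'rV[F]_m}) (A : {set 'rV[F]_n})
  : {set {ffun 'rV[F]_m -> 'rV[F]_n}} :=
  [set f : {ffun 'rV[F]_m -> 'rV[F]_n} |
    [&& [forall x in B, f x \in A],
        [forall x in ~: B, f x == 0] &
        [exists M : 'M[F]_(m, n), exists c : 'rV[F]_n,
           [forall x in B, f x == x *m M + c]]]].

Definition hom_aff (m n : nat) (B : {set 'rV[F]_m}) (A : {set 'rV[F]_n}) : nat :=
  #|hom_aff_set B A|.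

Definition weakly_sidorenko (m : nat) (B : {set 'rV[F]_m}) (C : R) : Prop :=
  forall (n : nat) (A : {set 'rV[F]_n}),
    let N : R := (#|F| ^ n)%:R in
    let alpha : R := #|A|%:R / N in
    powR alpha C * N ^+ rank_aff B <= (hom_aff B A)%:R.

Definition sidorenko (m : nat) (B : {set 'rV[F]_m}) : Prop :=
  weakly_sidorenko B (#|B|%:R).

Definition prod_set (m1 m2 : nat) (B1 : {set 'rV[F]_m1}) (B2 : {set 'rV[F]_m2})
  : {set 'rV[F]_(m1 + m2)} :=
  [set row_mx x y | x in B1, y in B2].

End Aff.

(* Main.v *)
Require Import Defs.
From HB Require Import structures.
From mathcomp Require Import boolp classical_sets interval_inference convex hoelder.
From mathcomp Require Import all_boot all_order all_algebra all_field.
From mathcomp Require Import reals exp Rstruct.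
From mathcomp Require Import ring lra.
From Stdlib Require Import Rdefinitions.
Set Implicit Arguments. Unset Strict Implicit. Unset Printing Implicit Defensive.
Import Order.TTheory GRing.Theory Num.Theory.
Local Open Scope ring_scope.


Section LA.
Variable F : finFieldType.

Definition ee m (x : 'rV[F]_m) : 'rV[F]_(m + 1) := row_mx x (1%:M : 'M_1).

Definition XS m (S : {set 'rV[F]_m}) : 'M[F]_(#|S|, m + 1) :=
  row_mx (\matrix_(i < #|S|) enum_val i) (const_mx 1).

Lemma row_XS m (S : {set 'rV[F]_m}) i : row i (XS S) = ee (enum_val i).
Proof.
rewrite /XS row_row_mx rowK /ee; congr row_mx.
by apply/matrixP => a b; rewrite !mxE !ord1.
Qed.

Lemma ee_neq0 m (x : 'rV[F]_m) : ee x != 0.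
Proof.
apply/eqP => /(congr1 rsubmx); rewrite row_mxKr => /matrixP /(_ 0 0).
by rewrite !mxE /= => /eqP; rewrite oner_eq0.
Qed.

Lemma ee_sub m (S : {set 'rV[F]_m}) x : x \in S -> (ee x <= XS S)%MS.
Proof.
move=> xS; rewrite -(enum_rankK_in xS xS) -row_XS; exact: row_sub.
Qed.

Lemma XS_subP m (S : {set 'rV[F]_m}) n' (V : 'M_(n', m + 1)) :
  reflect (forall x, x \in S -> (ee x <= V)%MS) (XS S <= V)%MS.
Proof.
apply: (iffP idP) => [H x xS | H].
  exact: submx_trans (ee_sub xS) H.
by apply/row_subP => i; rewrite row_XS; apply: H; apply: enum_valP.
Qed.

Lemma mul_XS m (S : {set 'rV[F]_m}) (v : 'rV_#|S|) :
  v *m XS S = \sum_i v 0 i *: ee (enum_val i).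
Proof.
by rewrite mulmx_sum_row; apply: eq_bigr => i _; rewrite row_XS.
Qed.

Lemma sum_ee m I (r : seq I) (P : pred I) (c : I -> F) (f : I -> 'rV[F]_m) :
  \sum_(i <- r | P i) c i *: ee (f i) =
  row_mx (\sum_(i <- r | P i) c i *: f i) ((\sum_(i <- r | P i) c i)%:M).
Proof.
elim/big_rec3: _ => [|i a b c' _ ->]; first by rewrite raddf0 row_mx0.
by rewrite /ee scale_row_mx add_row_mx scale_scalar_mx mulr1 raddfD.
Qed.

Lemma aff_indepE m (S : {set 'rV[F]_m}) : aff_indep S = row_free (XS S).
Proof.
apply/idP/idP => [/forallP H | fr].
  apply: inj_row_free => v.
  pose lam := [ffun x => \sum_(i | enum_val i == x) v 0 i].
  have lamE i : lam (enum_val i) = v 0 i.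
    rewrite ffunE (big_pred1 i) // => j /=.
    by rewrite (inj_eq enum_val_inj).
  rewrite mul_XS sum_ee -(@row_mx0 _ 1 m 1) => /eq_row_mx [H1 H2].
  have s1 : \sum_(x in S) lam x = 0.
    rewrite big_enum_val; under eq_bigr do rewrite lamE.
    by move/matrixP: H2 => /(_ 0 0); rewrite !mxE /= mulr1n.
  have s2 : \sum_(x in S) lam x *: x = 0.
    by rewrite big_enum_val /=; under eq_bigr do rewrite lamE.
  have /implyP := H lam; rewrite s1 s2 !eqxx => /(_ isT) /forallP H3.
  apply/rowP => i; rewrite mxE.
  by have /implyP /(_ (enum_valP i)) /eqP := H3 (enum_val i); rewrite lamE.
apply/forallP => lam; apply/implyP => /andP [/eqP s1 /eqP s2].
pose v := \row_(i < #|S|) lam (enum_val i).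
have : v *m XS S = 0.
  rewrite mul_XS sum_ee.
  under eq_bigr do rewrite mxE.
  under [X in (X%:M)]eq_bigr do rewrite mxE.
  have e1 : \sum_(i < #|S|) lam (enum_val i) *: enum_val i = 0.
    by move: s2; rewrite big_enum_val.
  have e2 : \sum_(i < #|S|) lam (enum_val i) = 0.
    by move: s1; rewrite big_enum_val.
  rewrite e1 e2 raddf0; exact: (@row_mx0 _ 1 m 1).
move/eqP; rewrite (mulmx_free_eq0 _ fr) => /eqP v0.
apply/forallP => x; apply/implyP => xS.
have := congr1 (fun w : 'rV_#|S| => w 0 (enum_rank_in xS x)) v0.
rewrite !mxE (enum_rankK_in xS xS) => ->; exact: eqxx.
Qed.


Lemma XS_mono m (S T : {set 'rV[F]_m}) : S \subset T -> (XS S <= XS T)%MS.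
Proof. by move/subsetP=> sST; apply/XS_subP => x xS; apply: ee_sub; apply: sST. Qed.

Lemma rank_aff_le m (B : {set 'rV[F]_m}) : (rank_aff B <= \rank (XS B))%nat.
Proof.
apply/bigmax_leqP => S /andP [sSB]; rewrite aff_indepE /row_free => /eqP <-.
exact: mxrankS (XS_mono sSB).
Qed.

Lemma basis_exists m (T : {set 'rV[F]_m}) :
  exists S : {set 'rV[F]_m}, [/\ S \subset T, row_free (XS S) & (XS T <= XS S)%MS].
Proof.
have [k] := ubnP #|T|; elim: k T => // k IH T Tk.
have [-> | [x xT]] := set_0Vmem T.
  exists set0; split; [exact: sub0set | | exact: submx_refl].
  have c0 : #|(set0 : {set 'rV[F]_m})| = 0%nat := cards0 _.
  by rewrite /row_free eqn_leq rank_leq_row /= [X in (X <= _)%nat]c0.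
have T'k : (#|T :\ x| < k)%nat.
  by rewrite -ltnS (leq_trans _ Tk) // (cardsD1 x T) xT.
have [S' [sS'T' frS' sT'S']] := IH _ T'k.
have xS' : x \notin S'.
  by apply/negP => /(subsetP sS'T'); rewrite !inE eqxx.
have sS'T : S' \subset T by apply: subset_trans sS'T' (subsetDl _ _).
case: (boolP (ee x <= XS S')%MS) => hx.
  exists S'; split=> //; apply/XS_subP => y yT.
  case: (eqVneq y x) => [-> //| yx].
  apply: submx_trans (ee_sub _) sT'S'; by rewrite !inE yx.
exists (x |: S'); split.
- by rewrite subUset sub1set xT.
- rewrite /row_free eqn_leq rank_leq_row /= [X in (X <= _)%nat]cardsU1 xS'.
  have C0 : (ee x :&: XS S')%MS = 0.
    apply/eqP; rewrite -mxrank_eq0.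
    have : (\rank (ee x :&: XS S') <= \rank (ee x))%nat by apply: mxrankS; apply: capmxSl.
    rewrite rank_rV ee_neq0 /=; case: (\rank _ =P 0%N) => // /eqP r1 r2.
    have r3 : \rank (ee x :&: XS S') = 1%nat.
      by apply/eqP; rewrite eqn_leq r2 lt0n r1.
    have [_ e] := mxrank_leqif_eq (capmxSl (ee x) (XS S')).
    move: e; rewrite r3 rank_rV ee_neq0 /= eqxx => /esym/andP [_ H].
    by move: H; rewrite sub_capmx (negbTE hx) andbF.
  have := mxrank_disjoint_sum C0; rewrite rank_rV ee_neq0 (eqP frS') /= => <-.
  apply: mxrankS; rewrite addsmx_sub ee_sub ?setU11 //=.
  by apply: XS_mono; apply: subsetUr.
- apply/XS_subP => y yT.
  case: (eqVneq y x) => [-> | yx]; first by apply: ee_sub; rewrite setU11.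
  apply: submx_trans (ee_sub _) (submx_trans sT'S' (XS_mono (subsetUr _ _))).
  by rewrite !inE yx.
Qed.

Lemma rank_affE m (B : {set 'rV[F]_m}) : rank_aff B = \rank (XS B).
Proof.
apply/eqP; rewrite eqn_leq rank_aff_le /=.
have [S [sSB frS sBS]] := basis_exists B.
apply: leq_trans (mxrankS sBS) _.
rewrite (eqP frS) /rank_aff (bigD1 S) /=; first exact: leq_maxl.
by rewrite sSB aff_indepE.
Qed.


Lemma prod_setE m1 m2 (B1 : {set 'rV[F]_m1}) (B2 : {set 'rV[F]_m2}) x y :
  (row_mx x y \in prod_set B1 B2) = (x \in B1) && (y \in B2).
Proof.
apply/idP/idP => [/imset2P [x' y' xB yB /eq_row_mx [-> ->]] | /andP [xB yB]].
  by rewrite xB yB.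
by apply/imset2P; exists x y.
Qed.

Lemma prod_setP m1 m2 (B1 : {set 'rV[F]_m1}) (B2 : {set 'rV[F]_m2}) z :
  (z \in prod_set B1 B2) = (lsubmx z \in B1) && (rsubmx z \in B2).
Proof. by rewrite -{1}(hsubmxK z) prod_setE. Qed.

Lemma ee_decomp m1 m2 (x x0 : 'rV[F]_m1) (y y0 : 'rV[F]_m2) :
  ee (row_mx x y) = ee (row_mx x y0) + ee (row_mx x0 y) - ee (row_mx x0 y0).
Proof.
rewrite /ee !opp_row_mx !add_row_mx.
by rewrite !addrK [y0 + y]addrC addrK.
Qed.

Definition P1 m1 m2 (y0 : 'rV[F]_m2) : 'M[F]_(m1 + 1, m1 + m2 + 1) :=
  col_mx (row_mx (row_mx 1%:M 0) 0) (ee (row_mx 0 y0)).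
Definition P2 m1 m2 (x0 : 'rV[F]_m1) : 'M[F]_(m2 + 1, m1 + m2 + 1) :=
  col_mx (row_mx (row_mx 0 1%:M) 0) (ee (row_mx x0 0)).

Lemma eeP1 m1 m2 (y0 : 'rV[F]_m2) (x : 'rV[F]_m1) : ee x *m P1 m1 y0 = ee (row_mx x y0).
Proof.
rewrite /ee /P1 mul_row_col !mul_mx_row mulmx1 !mulmx0 mul1mx !add_row_mx.
by rewrite addr0 !add0r mulmx1.
Qed.

Lemma eeP2 m1 m2 (x0 : 'rV[F]_m1) (y : 'rV[F]_m2) : ee y *m P2 m2 x0 = ee (row_mx x0 y).
Proof.
rewrite /ee /P2 mul_row_col !mul_mx_row mulmx1 !mulmx0 mul1mx !add_row_mx.
by rewrite !addr0 !add0r mulmx1.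
Qed.

Lemma rank_prod m1 m2 (B1 : {set 'rV[F]_m1}) (B2 : {set 'rV[F]_m2}) x0 y0 :
  x0 \in B1 -> y0 \in B2 ->
  (\rank (XS (prod_set B1 B2)) + 1 <= \rank (XS B1) + \rank (XS B2))%nat.
Proof.
move=> x0B y0B.
set U1 := XS B1 *m P1 m1 y0; set U2 := XS B2 *m P2 m2 x0.
have sU1 x : x \in B1 -> (ee (row_mx x y0) <= U1)%MS.
  by move=> xB; rewrite -eeP1; apply: submxMr; apply: ee_sub.
have sU2 y : y \in B2 -> (ee (row_mx x0 y) <= U2)%MS.
  by move=> yB; rewrite -eeP2; apply: submxMr; apply: ee_sub.
have sP : (XS (prod_set B1 B2) <= U1 + U2)%MS.
  apply/XS_subP => z /imset2P [x y xB yB ->].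
  rewrite (ee_decomp x x0 y y0); apply: addmx_sub; first apply: addmx_sub.
  - exact: submx_trans (sU1 _ xB) (addsmxSl _ _).
  - exact: submx_trans (sU2 _ yB) (addsmxSr _ _).
  - by rewrite eqmx_opp; exact: submx_trans (sU1 _ x0B) (addsmxSl _ _).
have cap1 : (1 <= \rank (U1 :&: U2))%nat.
  have : (ee (row_mx x0 y0) <= U1 :&: U2)%MS by rewrite sub_capmx sU1 // sU2.
  by move/mxrankS; rewrite rank_rV ee_neq0.
have := mxrank_sum_cap U1 U2.
have r1 : (\rank U1 <= \rank (XS B1))%nat by apply: mxrankM_maxl.
have r2 : (\rank U2 <= \rank (XS B2))%nat by apply: mxrankM_maxl.
move=> e; apply: leq_trans (leq_add r1 r2); rewrite -e.
exact: leq_add (mxrankS sP) cap1.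
Qed.

End LA.


Section Count.
Variable F : finFieldType.

Lemma hom_affP m n (B : {set 'rV[F]_m}) (A : {set 'rV[F]_n}) (f : {ffun 'rV[F]_m -> 'rV[F]_n}) :
  reflect ([/\ forall x, x \in B -> f x \in A, forall x, x \notin B -> f x = 0 &
             exists M c, forall x, x \in B -> f x = x *m M + c])
          (f \in hom_aff_set B A).
Proof.
rewrite inE; apply: (iffP and3P) => [[/forallP H1 /forallP H2 /existsP [M /existsP [c /forallP H3]]] | [H1 H2 [M [c H3]]]].
  split.
  - by move=> x xB; have /implyP := H1 x; apply.
  - by move=> x xB; have /implyP /(_ _) /eqP := H2 x; apply; rewrite inE.
  - by exists M, c => x xB; have /implyP /(_ xB) /eqP := H3 x.
split.
- by apply/forallP => x; apply/implyP; apply: H1.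
- by apply/forallP => x; apply/implyP; rewrite inE => xB; rewrite H2.
- apply/existsP; exists M; apply/existsP; exists c; apply/forallP => x.
  by apply/implyP => xB; rewrite H3.
Qed.

Lemma card_dep (T1 T2 : finType) (Q : T1 -> {set T2}) :
  #|[set p : T1 * T2 | p.2 \in Q p.1]| = (\sum_a #|Q a|)%nat.
Proof.
rewrite -sum1_card.
rewrite (eq_bigl (fun p : T1 * T2 => predT p.1 && (p.2 \in Q p.1))); last first.
  by move=> p; rewrite inE.
rewrite -(pair_big_dep predT (fun a b => b \in Q a) (fun _ _ => 1%nat)) /=.
by apply: eq_bigr => a _; rewrite sum1_card.
Qed.

Lemma eeM m n (y : 'rV[F]_m) (M : 'M[F]_(m, n)) c : ee y *m col_mx M c = y *m M + c.
Proof. by rewrite /ee mul_row_col mul1mx. Qed.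

Lemma eeZ m n (y : 'rV[F]_m) (Z : 'M[F]_(m + 1, n)) : ee y *m Z = y *m usubmx Z + dsubmx Z.
Proof. by rewrite -{1}(vsubmxK Z) eeM. Qed.

Variables (m2 : nat) (B2 : {set 'rV[F]_m2}).
Local Notation d := (\rank (XS B2)).
Local Notation Rb := (row_base (XS B2)).
Variable (R : 'M[F]_(m2 + 1, d)).
Hypothesis RbR : Rb *m R = 1%:M.

Definition hW n (W : 'M[F]_(d, n)) (y : 'rV[F]_m2) : 'rV[F]_n := ee y *m (R *m W).

Lemma hW_inj n (W W' : 'M[F]_(d, n)) :
  (forall y, y \in B2 -> hW W y = hW W' y) -> W = W'.
Proof.
move=> H; apply/eqP; rewrite -subr_eq0; apply/eqP.
have X0 : XS B2 *m (R *m (W - W')) = 0.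
  apply/row_matrixP => i; rewrite row_mul row0 row_XS mulmxBr mulmxBr.
  by rewrite -/(hW W _) -/(hW W' _) H ?subrr //; apply: enum_valP.
have [K eK] : exists K, Rb = K *m XS B2 by apply/submxP; rewrite eq_row_base submx_refl.
by rewrite -[W - W']mul1mx -RbR eK -!mulmxA X0 mulmx0.
Qed.

Lemma hW_surj n (Z : 'M[F]_(m2 + 1, n)) y : y \in B2 -> hW (Rb *m Z) y = ee y *m Z.
Proof.
move=> yB; have : (ee y <= Rb)%MS by rewrite eq_row_base ee_sub.
case/submxP => u eu; rewrite /hW eu.
move: RbR; generalize (row_base (XS B2)) => Q QR.
by rewrite -!mulmxA (mulmxA Q R) QR mul1mx.
Qed.


Variables (n : nat) (A : {set 'rV[F]_n}).

Definition AW (W : 'M[F]_(d, n)) : {set 'rV[F]_n} :=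
  [set a : 'rV[F]_n | [forall y in B2, a + hW W y \in A]].

Lemma AWP W a : reflect (forall y, y \in B2 -> a + hW W y \in A) (a \in AW W).
Proof.
rewrite inE; apply: (iffP forallP) => H y.
  by move=> yB; have /implyP := H y; apply.
by apply/implyP; apply: H.
Qed.

Lemma count1 :
  (hom_aff B2 A * #|{: 'rV[F]_n}| <= \sum_W #|AW W|)%nat.
Proof.
rewrite -card_dep.
pose f1 := fun p : 'M[F]_(d, n) * 'rV[F]_n =>
  ([ffun y => if y \in B2 then p.2 + hW p.1 y else 0], p.2).
have sub : setX (hom_aff_set B2 A) [set: 'rV[F]_n] \subset
           f1 @: [set p : 'M[F]_(d, n) * 'rV[F]_n | p.2 \in AW p.1].
  apply/subsetP => -[psi a]; rewrite inE /= => /andP [/hom_affP [H1 H2 [M [c H3]]] _].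
  have key y : y \in B2 -> a + hW (Rb *m col_mx M (c - a)) y = psi y.
    by move=> yB; rewrite hW_surj // eeM H3 // addrCA [a + _]addrC subrK.
  apply/imsetP; exists (Rb *m col_mx M (c - a), a).
    by rewrite inE /=; apply/AWP => y yB; rewrite key // H1.
  rewrite /f1 /=; congr pair; apply/ffunP => y; rewrite ffunE.
  by case: ifP => yB; [rewrite key | rewrite H2 // yB].
have := subset_leq_card sub; rewrite cardsX cardsT => h.
apply: leq_trans h _; exact: leq_imset_card.
Qed.

Variables (m1 : nat) (B1 : {set 'rV[F]_m1}) (x0 : 'rV[F]_m1) (y0 : 'rV[F]_m2).
Hypotheses (x0B : x0 \in B1) (y0B : y0 \in B2).

Definition Phi (W : 'M[F]_(d, n)) (g : {ffun 'rV[F]_m1 -> 'rV[F]_n}) :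
  {ffun 'rV[F]_(m1 + m2) -> 'rV[F]_n} :=
  [ffun z => if z \in prod_set B1 B2 then g (lsubmx z) + hW W (rsubmx z) else 0].

Lemma PhiE W g x y : x \in B1 -> y \in B2 -> Phi W g (row_mx x y) = g x + hW W y.
Proof. by move=> xB yB; rewrite ffunE prod_setE xB yB row_mxKl row_mxKr. Qed.

Lemma count2 :
  (\sum_W hom_aff B1 (AW W) <= hom_aff (prod_set B1 B2) A * #|{: 'rV[F]_n}|)%nat.
Proof.
rewrite /hom_aff -(card_dep (fun W => hom_aff_set B1 (AW W))).
set P2 := [set p | _].
pose f2 := fun p : 'M[F]_(d, n) * {ffun 'rV[F]_m1 -> 'rV[F]_n} =>
  (Phi p.1 p.2, hW p.1 y0).
have inj : {in P2 &, injective f2}.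
  move=> [W g] [W' g'] H H'; move: H; rewrite inE /= => /hom_affP [_ G2 _].
  move: H'; rewrite inE /= => /hom_affP [_ G2' _].
  rewrite /f2 /= => -[e1 e2].
  have gx x : x \in B1 -> g x = g' x.
    move=> xB; have := congr1 (fun f : {ffun 'rV[F]_(m1 + m2) -> 'rV[F]_n} => f (row_mx x y0)) e1.
    by rewrite /= !PhiE // e2 => /addIr.
  have eW : W = W'.
    apply: hW_inj => y yB; have := congr1 (fun f : {ffun 'rV[F]_(m1 + m2) -> 'rV[F]_n} => f (row_mx x0 y)) e1.
    by rewrite /= !PhiE // gx // => /addrI.
  have eg : g = g'.
    apply/ffunP => x; case: (boolP (x \in B1)) => xB; first exact: gx.
    by rewrite G2 // G2'.
  by rewrite eW eg.
rewrite -(card_in_imset inj) -(cardsT 'rV[F]_n) -cardsX.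
apply: subset_leq_card; apply/subsetP => q /imsetP [[W g]].
rewrite inE /= => /hom_affP [G1 G2 [M1 [c1 G3]]] ->.
rewrite inE /= in_setT andbT; apply/hom_affP; split.
- move=> z; rewrite ffunE => zP; rewrite zP; move: zP; rewrite prod_setP => /andP [lB rB].
  by have /AWP := G1 _ lB; apply.
- by move=> z zP; rewrite ffunE (negbTE zP).
- exists (col_mx M1 (usubmx (R *m W))), (c1 + dsubmx (R *m W)) => z zP.
  rewrite ffunE zP; move: zP; rewrite prod_setP => /andP [lB rB].
  rewrite G3 // /hW eeZ -{3}(hsubmxK z) mul_row_col.
  by rewrite addrACA.
Qed.

End Count.


Lemma NatpowE (q n : nat) : Nat.pow q n = expn q n.
Proof. by elim: n => [|n IH] //=; rewrite expnS IH. Qed.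

Lemma card_gt1 (F : finFieldType) : (1 < #|F|)%nat.
Proof.
have : #|[set (0 : F); 1]| = 2%nat by rewrite cards2 eq_sym oner_neq0.
move=> <-; exact: max_card.
Qed.

Lemma ws_ge (F : finFieldType) m (B : {set 'rV[F]_m}) C :
  weakly_sidorenko B C -> (rank_aff B)%:R <= C.
Proof.
pose z := (0 : 'rV[F]_1); pose f0 := (0 : {ffun 'rV[F]_m -> 'rV[F]_1}).
move=> H; have := H 1%nat [set z]; cbv zeta.
have hom1 : (hom_aff B [set z] <= 1)%nat.
  have S : hom_aff_set B [set z] \subset [set f0].
    apply/subsetP => f /hom_affP [H1 H2 _].
    rewrite inE; apply/eqP/ffunP => x; rewrite ffunE.
    case: (boolP (x \in B)) => xB; last exact: H2.
    by have := H1 x xB; rewrite inE => /eqP.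
  rewrite /hom_aff; apply: (leq_trans (subset_leq_card S)); by rewrite cards1.
rewrite cards1 NatpowE expn1.
set q := #|F|; set r := rank_aff B.
have q1 : 1 < q%:R :> R by rewrite ltr1n card_gt1.
have q0 : 0 < q%:R :> R by apply: lt_trans q1.
have lq : 0 < ln (q%:R : R) by apply: ln_gt0.
have P0 : 0 < powR (1 / q%:R) C by apply: powR_gt0; rewrite div1r invr_gt0.
have Q0 : 0 < (q%:R : R) ^+ r by apply: exprn_gt0.
move=> H'.
have H2 : powR (1 / q%:R) C * q%:R ^+ r <= 1.
  by apply: le_trans H' _; rewrite lern1.
have : ln (powR (1 / q%:R) C * q%:R ^+ r) <= ln 1.
  by rewrite ler_ln // posrE ?mulr_gt0.
rewrite ln1 lnM ?posrE // ln_powR lnXn // div1r lnV ?posrE //.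
rewrite mulrN -mulr_natr addrC subr_le0 => h.
rewrite -(ler_pM2r lq) mulr_natl; move: h; rewrite mul1r; exact.
Qed.

Lemma conv2 (p w x y : R) : 1 <= p -> 0 <= w <= 1 -> 0 <= x -> 0 <= y ->
  powR (w * x + (1 - w) * y) p <= w * powR x p + (1 - w) * powR y p.
Proof.
move=> p1 /andP[w0 w1] x0 y0.
have := @convex_powR R p p1 (Itv01 w0 w1) x y.
rewrite !classical_sets.inE /= !in_itv /= !andbT => /(_ x0 y0).
by rewrite !convRE /=.
Qed.

Lemma jensen_seq (T : Type) (p : R) (r : seq T) (F : T -> R) :
  1 <= p -> (forall i, 0 <= F i) -> (0 < size r)%nat ->
  (size r)%:R * powR ((\sum_(i <- r) F i) / (size r)%:R) p
    <= \sum_(i <- r) powR (F i) p.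
Proof.
move=> p1 F0; elim: r => [//|a r IH] _.
case: r IH => [|b r] IH.
  by rewrite /= !big_cons !big_nil !addr0 divr1 mul1r.
have /(_ isT) := IH; set k := size (b :: r); set S := \sum_(i <- b :: r) F i.
set P := \sum_(i <- b :: r) powR (F i) p => IHk.
have k0 : 0 < k%:R :> R by rewrite ltr0n.
have S0 : 0 <= S by rewrite /S sumr_ge0.
rewrite big_cons [in X in _ <= X]big_cons -/S -/P /= -/k.
set w := (k.+1%:R)^-1 : R.
have k1 : 0 < k.+1%:R :> R by rewrite ltr0n.
have w01 : 0 <= w <= 1 by rewrite /w invr_ge0 ltW //= invf_le1 // ler1n.
have E : (F a + S) / k.+1%:R = w * F a + (1 - w) * (S / k%:R).
  have kk : k.+1%:R = k%:R + 1 :> R by rewrite -[k.+1]addn1 natrD.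
  rewrite /w kk; field.
  rewrite -kk; apply/andP; split; rewrite gt_eqF //.
rewrite E -/k.
have -> : (size r).+2 = k.+1 by [].
have H := conv2 p1 w01 (F0 a) (divr_ge0 S0 (ltW k0)).
have H2 := ler_wpM2l (ltW k1) H.
apply: le_trans H2 _.
rewrite mulrDr mulrA /w mulfV ?gt_eqF // mul1r lerD2l.
have -> : k.+1%:R * ((1 - (k.+1%:R)^-1) * powR (S / k%:R) p) = k%:R * powR (S / k%:R) p :> R.
  rewrite mulrA mulrBr mulr1 mulfV ?gt_eqF // -[k.+1]addn1 natrD addrK //.
done.
Qed.

Lemma size_ie (T : finType) : size (index_enum T) = #|T|.
Proof. by rewrite cardT -deprecated_filter_index_enum filter_predT. Qed.

Lemma jensen_fin (T : finType) (p : R) (G : T -> R) :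
  1 <= p -> (forall i, 0 <= G i) -> (0 < #|T|)%nat ->
  #|T|%:R * powR ((\sum_i G i) / #|T|%:R) p <= \sum_i powR (G i) p.
Proof.
move=> p1 G0 T0; have := @jensen_seq T p (index_enum T) G p1 G0.
by rewrite size_ie; apply.
Qed.

Lemma powR_le1 (a c : R) : 0 <= a <= 1 -> 0 <= c -> powR a c <= 1.
Proof.
move=> /andP [a0 a1] c0; case: (eqVneq a 0) => [-> | an0].
  by rewrite /powR eqxx; case: (c == 0).
rewrite -(powRr0 a); apply: ger_powR => //.
by rewrite lt_neqAle eq_sym an0 a0.
Qed.

Lemma rank_aff0 (F : finFieldType) m : rank_aff (set0 : {set 'rV[F]_m}) = 0%nat.
Proof.
apply/eqP; rewrite -leqn0; apply/bigmax_leqP => S /andP [S0 _].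
move: S0; rewrite subset0 => /eqP ->; by rewrite cards0.
Qed.

Lemma main_ws (F : finFieldType) m1 m2 (B1 : {set 'rV[F]_m1}) (B2 : {set 'rV[F]_m2})
  (C1 C2 : R) :
  weakly_sidorenko B1 C1 -> weakly_sidorenko B2 C2 ->
  weakly_sidorenko (prod_set B1 B2) (C1 * C2).
Proof.
move=> H1 H2 n A; cbv zeta; rewrite NatpowE.
have C10 : 0 <= C1 := le_trans (ler0n _ _) (ws_ge H1).
have C20 : 0 <= C2 := le_trans (ler0n _ _) (ws_ge H2).
have q1 : (1 < #|F|)%nat := card_gt1 F.
have N1 : 1 <= (expn #|F| n)%:R :> R by rewrite ler1n expn_gt0 (ltnW q1).
have N0 : 0 < (expn #|F| n)%:R :> R by apply: lt_le_trans ltr01 N1.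
have cardrV : #|{: 'rV[F]_n}| = (expn #|F| n)%nat by rewrite card_mx mul1n.
have a0 : 0 <= #|A|%:R / (expn #|F| n)%:R :> R by rewrite divr_ge0 // ltW.
have a1 : #|A|%:R / (expn #|F| n)%:R <= 1 :> R.
  by rewrite ler_pdivrMr // mul1r ler_nat -cardrV max_card.
have empty_case : prod_set B1 B2 = set0 ->
  powR (#|A|%:R / (expn #|F| n)%:R) (C1 * C2) * (expn #|F| n)%:R ^+ rank_aff (prod_set B1 B2)
   <= (hom_aff (prod_set B1 B2) A)%:R.
  move=> ->; rewrite rank_aff0 expr0 mulr1.
  apply: le_trans (powR_le1 _ _) _; first by rewrite a0 a1.
    exact: mulr_ge0.
  rewrite ler1n; apply/card_gt0P; exists [ffun _ => 0]; apply/hom_affP; split.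
  - by move=> x; rewrite in_set0.
  - by move=> x _; rewrite ffunE.
  - by exists 0, 0 => x; rewrite in_set0.
case: (set_0Vmem B1) => [B10 | [x0 x0B]].
  by apply: empty_case; apply/setP => z; rewrite in_set0 prod_setP B10 in_set0.
case: (set_0Vmem B2) => [B20 | [y0 y0B]].
  by apply: empty_case; apply/setP => z; rewrite in_set0 prod_setP B20 in_set0 andbF.
clear empty_case.
set N : R := (expn #|F| n)%:R.
set alpha : R := #|A|%:R / N.
have [Rm RbR] := row_freeP (row_base_free (XS B2)).
have c1 := count1 RbR A; rewrite cardrV in c1.
have c2 := count2 RbR A x0B y0B; rewrite cardrV in c2.
have h1W W : powR (#|AW Rm A W|%:R / N) C1 * N ^+ rank_aff B1
             <= (hom_aff B1 (AW Rm A W))%:R.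
  by have := H1 n (AW Rm A W); cbv zeta; rewrite NatpowE.
have h2 : powR alpha C2 * N ^+ \rank (XS B2) <= (hom_aff B2 A)%:R.
  by have := H2 n A; cbv zeta; rewrite NatpowE rank_affE.
pose a W := #|AW Rm A W|%:R / N.
have a_ge0 W : 0 <= a W by rewrite divr_ge0 // ltW.
have S1 : N ^+ rank_aff B1 * \sum_W powR (a W) C1
          <= (hom_aff (prod_set B1 B2) A)%:R * N.
  rewrite mulr_sumr; apply: (@le_trans _ _ (\sum_W (hom_aff B1 (AW Rm A W))%:R)).
    by apply: ler_sum => W _; rewrite mulrC; exact: h1W.
  by rewrite -natr_sum /N -natrM ler_nat.
have K : #|{: 'M[F]_(\rank (XS B2), n)}|%:R = N ^+ \rank (XS B2) :> R.
  by rewrite card_mx /N -natrX -expnM mulnC.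
have Kpos : (0 < #|{: 'M[F]_(\rank (XS B2), n)}|)%nat.
  by rewrite card_mx expn_gt0 (ltnW q1).
have C11 : 1 <= C1.
  apply: le_trans (ws_ge H1); rewrite ler1n rank_affE.
  by have := mxrankS (ee_sub x0B); rewrite rank_rV ee_neq0.
have J := jensen_fin C11 a_ge0 Kpos.
have e1 : (hom_aff B2 A)%:R <= \sum_W a W.
  rewrite /a -mulr_suml -natr_sum ler_pdivlMr // /N -natrM ler_nat; exact: c1.
have L : powR alpha C2 <= (\sum_W a W) / #|{: 'M[F]_(\rank (XS B2), n)}|%:R.
  by rewrite K ler_pdivlMr ?exprn_gt0 //; apply: le_trans h2 e1.
have L2 : powR alpha (C1 * C2)
          <= powR ((\sum_W a W) / #|{: 'M[F]_(\rank (XS B2), n)}|%:R) C1.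
  rewrite mulrC powRrM; apply: ge0_ler_powR => //; rewrite nnegrE ?powR_ge0 //.
  by rewrite divr_ge0 // sumr_ge0.
have rp := rank_prod x0B y0B; rewrite -!rank_affE in rp.
rewrite -(ler_pM2r N0) -mulrA -exprSr.
apply: le_trans (ler_wpM2l (powR_ge0 _ _) (ler_weXn2l N1 _)) _.
  by rewrite -addn1; exact: rp.
rewrite exprD mulrCA mulrA; apply: le_trans S1.
rewrite -mulrA; apply: ler_wpM2l; first exact: exprn_ge0 (ltW N0).
rewrite rank_affE -K mulrC; apply: le_trans J.
by apply: ler_wpM2l; [exact: ler0n | exact: L2].
Qed.


Theorem theorem1p12 (F : finFieldType) (m1 m2 : nat)
    (B1 : {set 'rV[F]_m1}) (B2 : {set 'rV[F]_m2}) :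
  (forall C1 C2 : R,
      weakly_sidorenko B1 C1 -> weakly_sidorenko B2 C2 ->
      weakly_sidorenko (prod_set B1 B2) (C1 * C2)) /\
  (sidorenko B1 -> sidorenko B2 -> sidorenko (prod_set B1 B2)).
Proof.
split; first by move=> C1 C2; apply: main_ws.
rewrite /sidorenko => H1 H2.
have cardP : #|prod_set B1 B2| = (#|B1| * #|B2|)%nat.
  have -> : prod_set B1 B2 = (fun p => row_mx p.1 p.2) @: setX B1 B2.
    apply/setP => z; apply/idP/imsetP.
      rewrite prod_setP => /andP [l r]; exists (lsubmx z, rsubmx z).
        by rewrite inE l r.
      by rewrite hsubmxK.
    case=> [[x y]]; rewrite inE /= => /andP [xB yB] ->; by rewrite prod_setE xB yB.
  rewrite card_imset; last by move=> [x y] [x' y'] /= /eq_row_mx [-> ->].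
  by rewrite cardsX.
rewrite cardP natrM; exact: main_ws H1 H2.
Qed.
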